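(* Let $s\in\mathbb{T}$ and let $C_s$ denote the surface $C_{\underline t}$ for any $\underline t\in\theta^{-1}(s)$. A point $\chi\in C_s$ is a singular point of $C_s$ if and only if there exist $w\in W$ and $\underline t'\in\theta^{-1}(w(s))$ such that the character of $Z(H(\underline t';1))$ corresponding to $\chi$ extends to a one-dimensional representation of $H(\underline t';1)$.
   Context: $H(k_0,k_1,u_0,u_1;1)$ is the $\mathbb{C}$-algebra generated by $V_0,V_1,V_0^\vee,V_1^\vee$ with relations $(V_0-k_0)(V_0+k_0^{-1})=0$, $(V_1-k_1)(V_1+k_1^{-1})=0$, $(V_0^\vee-u_0)(V_0^\vee+u_0^{-1})=0$, $(V_1^\vee-u_1)(V_1^\vee+u_1^{-1})=0$, $V_1^\vee V_1V_0V_0^\vee=1$. Its center is $\mathbb{C}[X_1,X_2,X_3]/(R_{\underline t})$ with $X_1=V_1^\vee V_1+V_0V_0^\vee$, $X_2=V_1V_0+V_0^\vee V_1^\vee$, $X_3=V_1V_0^\vee+(V_0^\vee)^{-1}V_1^{-1}$, and $R_{\underline t}=X_1X_2X_3-X_1^2-X_2^2-X_3^2+p_1X_1+p_2X_2+p_3X_3+p_0+4$ with $\bar k_i=k_i-k_i^{-1}$, $\bar u_i=u_i-u_i^{-1}$, $p_1=\bar u_0\bar k_0+\bar k_1\bar u_1$, $p_2=\bar u_1\bar u_0+\bar k_0\bar k_1$, $p_3=\bar k_0\bar u_1+\bar k_1\bar u_0$, $p_0=\bar k_0^2+\bar k_1^2+\bar u_0^2+\bar u_1^2-\bar k_0\bar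 k_1\bar u_0\bar u_1$; $C_{\underline t}=\{R_{\underline t}=0\}\subset\mathbb{C}^3$, and a point $\chi=(\chi_1,\chi_2,\chi_3)\in C_{\underline t}$ is identified with the character $X_i\mapsto\chi_i$ of the center. Let $\mathbb{T}=\mathrm{Spec}\,\mathbb{C}[P]$, $P$ the weight lattice of $D_4$, with coordinates $s_1,\dots,s_4,\delta$ satisfying $s_1s_2s_3s_4=\delta^2$, acted on by the Weyl group $W=W(D_4)$. Writing $\underline t=(t_1,t_2,t_3,t_4)=(k_0,k_1,u_0,u_1)$, define $\theta:(\mathbb{C}^* )^4\to\mathbb{T}$ by $s_1=t_1t_2$, $s_2=-t_1/t_2$, $s_3=-t_3/t_4$, $s_4=t_3t_4$, $\delta=t_1t_3$. The coefficient vector $(p_0,p_1,p_2,p_3)$ of $R_{\underline t}$ depends only on the $W$-orbit of $\theta(\underline t)$, so $C_s$ is well defined and equals $C_{\underline t'}$ for all $\underline t'\in\theta^{-1}(w(s))$, $w\in W$. *)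

(* Defs.v *)
(* The base field C of the paper is modelled as R[i] for an
   arbitrary real closed field R; the definitions below are
   stated over an arbitrary field F. *)
From HB Require Import structures.
From mathcomp Require Import all_boot all_order all_algebra all_fingroup.
From mathcomp Require Import complex.
From mathcomp Require Import mpoly.

Set Implicit Arguments.
Unset Strict Implicit.
Unset Printing Implicit Defensive.
Import Order.TTheory GRing.Theory Num.Theory.
Local Open Scope ring_scope.

Section DAHA.
Variable F : fieldType.

Definition bar (x : F) : F := x - x^-1.

Definition pc1 (k0 k1 u0 u1 : F) : F := bar u0 * bar k0 + bar k1 * bar u1.
Definition pc2 (k0 k1 u0 u1 : F) : F := bar u1 * bar u0 + bar k0 * bar k1.
Definition pc3 (k0 k1 u0 u1 : F) : F := bar k0 * bar u1 + bar k1 * bar u0.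
Definition pc0 (k0 k1 u0 u1 : F) : F :=
  bar k0 ^+ 2 + bar k1 ^+ 2 + bar u0 ^+ 2 + bar u1 ^+ 2
  - bar k0 * bar k1 * bar u0 * bar u1.

(* The polynomial R_t in C[X_1, X_2, X_3]; variable X_{i+1} is 'X_i. *)
Definition Rpoly (k0 k1 u0 u1 : F) : {mpoly F[3]} :=
  'X_0 * 'X_1 * 'X_2 - 'X_0 ^+ 2 - 'X_1 ^+ 2 - 'X_2 ^+ 2
  + pc1 k0 k1 u0 u1 *: 'X_0 + pc2 k0 k1 u0 u1 *: 'X_1
  + pc3 k0 k1 u0 u1 *: 'X_2 + (pc0 k0 k1 u0 u1 + 4)%:MP.

Definition on_surface (k0 k1 u0 u1 : F) (chi : 'I_3 -> F) : Prop :=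
  (Rpoly k0 k1 u0 u1).@[chi] = 0.

Definition singular_point (k0 k1 u0 u1 : F) (chi : 'I_3 -> F) : Prop :=
  (Rpoly k0 k1 u0 u1).@[chi] = 0 /\
  forall i : 'I_3, ((Rpoly k0 k1 u0 u1)^`M(i)).@[chi] = 0.

(* A one-dimensional representation of H(k0,k1,u0,u1;1) is (by the universal
   property of an algebra given by generators and relations) the same as an
   assignment of scalars v0, v1, w0, w1 to V_0, V_1, V_0^vee, V_1^vee
   satisfying the defining relations.  [extends_1dim t chi] says that some
   such representation restricts on the center C[X_1,X_2,X_3]/(R_t) to the
   character X_i |-> chi_i. *)
Definition onedim_rep (k0 k1 u0 u1 v0 v1 w0 w1 : F) : Prop :=
  [/\ (v0 - k0) * (v0 + k0^-1) = 0, (v1 - k1) * (v1 + k1^-1) = 0,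
      (w0 - u0) * (w0 + u0^-1) = 0, (w1 - u1) * (w1 + u1^-1) = 0
    & w1 * v1 * v0 * w0 = 1].

Definition extends_1dim (k0 k1 u0 u1 : F) (chi : 'I_3 -> F) : Prop :=
  exists v0 v1 w0 w1 : F,
    [/\ onedim_rep k0 k1 u0 u1 v0 v1 w0 w1,
        w1 * v1 + v0 * w0 = chi 0,
        v1 * v0 + w0 * w1 = chi 1
      & v1 * w0 + w0^-1 * v1^-1 = chi 2].

(* Points of the torus T = Spec C[P]: coordinates (s_1..s_4, delta), all
   nonzero, with s_1 s_2 s_3 s_4 = delta^2.  s_{i+1} is s i. *)
Definition in_T (s : {ffun 'I_4 -> F}) (d : F) : Prop :=
  (forall i, s i != 0) /\ d != 0 /\ \prod_i s i = d ^+ 2.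

Definition theta_s (k0 k1 u0 u1 : F) : {ffun 'I_4 -> F} :=
  [ffun i : 'I_4 => tnth [tuple k0 * k1; - (k0 / k1); - (u0 / u1); u0 * u1] i].
Definition theta_d (k0 k1 u0 u1 : F) : F := k0 * u0.

(* The Weyl group W(D_4) = S_4 |x (Z/2)^3 acting on T: an element is a
   permutation p of the four coordinates together with an even subset S of
   coordinates whose sign is flipped (eps_j -> -eps_j for j in S).  On
   characters: s_j -> s_j^{-1} for j in S, delta -> delta * prod_{j in S}
   s_j^{-1} (as (eps_1+..+eps_4)/2 -> (eps_1+..+eps_4)/2 - sum_{j in S} eps_j),
   followed by the permutation of the s_j. *)
Definition W_elt (p : 'S_4) (S : {set 'I_4}) : Prop := ~~ odd #|S|.

Definition Wact_s (p : 'S_4) (S : {set 'I_4}) (s : {ffun 'I_4 -> F})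
    : {ffun 'I_4 -> F} :=
  [ffun i => let j := (p^-1)%g i in if j \in S then (s j)^-1 else s j].
Definition Wact_d (p : 'S_4) (S : {set 'I_4}) (s : {ffun 'I_4 -> F}) (d : F)
    : F :=
  d * \prod_(j in S) (s j)^-1.

End DAHA.

(* Main.v *)
Require Import Defs.
From HB Require Import structures.
From mathcomp Require Import all_boot all_order all_algebra all_fingroup.
From mathcomp Require Import complex.
From mathcomp Require Import mpoly.
From mathcomp Require Import ring.
Set Implicit Arguments.
Unset Strict Implicit.
Unset Printing Implicit Defensive.
Import GRing.Theory Num.Theory.
Local Open Scope ring_scope.


Section Gen.
Variable F : fieldType.

Definition o0 : 'I_4 := @Ordinal 4 0 isT.
Definition o1 : 'I_4 := @Ordinal 4 1 isT.
Definition o2 : 'I_4 := @Ordinal 4 2 isT.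
Definition o3 : 'I_4 := @Ordinal 4 3 isT.

Lemma sum4 (R : comNzRingType) (G : 'I_4 -> R) : \sum_i G i = G o0 + G o1 + G o2 + G o3.
Proof.
rewrite !big_ord_recr big_ord0 /= add0r.
by congr (_ + _ + _ + _); congr G; apply: val_inj.
Qed.

Lemma prod4 (R : comNzRingType) (G : 'I_4 -> R) : \prod_i G i = G o0 * G o1 * G o2 * G o3.
Proof.
rewrite !big_ord_recr big_ord0 /= mul1r.
by congr (_ * _ * _ * _); congr G; apply: val_inj.
Qed.

Definition xx (a : F) := a + a^-1.
Definition J1 (s : {ffun 'I_4 -> F}) := \sum_i xx (s i).
Definition J2 (s : {ffun 'I_4 -> F}) := \sum_i (xx (s i))^+2.
Definition Ap (s : {ffun 'I_4 -> F}) d := d * \prod_i (1 + (s i)^-1).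
Definition Am (s : {ffun 'I_4 -> F}) d := d * \prod_i (1 - (s i)^-1).

Section T.
Variables k0 k1 u0 u1 : F.
Hypotheses (h0 : k0 != 0) (h1 : k1 != 0) (h2 : u0 != 0) (h3 : u1 != 0).
Let s := theta_s k0 k1 u0 u1.
Let d := theta_d k0 k1 u0 u1.
Lemma thetaE : [/\ s o0 = k0 * k1, s o1 = - (k0 / k1), s o2 = - (u0 / u1)
   & s o3 = u0 * u1].
Proof. by rewrite /s !ffunE. Qed.

Ltac fs := rewrite /J1 /J2 /Ap /Am ?sum4 ?prod4 /xx; case: thetaE => -> -> -> ->;
  rewrite /d /theta_d /pc0 /pc1 /pc2 /pc3 /bar; field;
  by rewrite ?oppr_eq0 ?h0 ?h1 ?h2 ?h3 ?mulf_neq0.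

Lemma pc1E : 2 * pc1 k0 k1 u0 u1 = Ap s d + Am s d.
Proof. fs. Qed.
Lemma pc3E : 2 * pc3 k0 k1 u0 u1 = Am s d - Ap s d.
Proof. fs. Qed.
Lemma pc2E : pc2 k0 k1 u0 u1 = J1 s.
Proof. fs. Qed.
Lemma pc0E : 2 * pc0 k0 k1 u0 u1 = -16 - (J1 s ^+ 2 - J2 s).
Proof. fs. Qed.
Lemma theta_prod : d ^+ 2 = \prod_i s i.
Proof. rewrite prod4; case: thetaE => -> -> -> ->; rewrite /d /theta_d.
field. by rewrite ?h1 ?h3. Qed.
Lemma theta_nz i : s i != 0.
Proof. have [e0 e1 e2 e3] := thetaE.
case: i => [[|[|[|[|//]]]] Hi].
- have -> : Ordinal Hi = o0 by apply: val_inj. by rewrite e0 mulf_neq0.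
- have -> : Ordinal Hi = o1 by apply: val_inj. by rewrite e1 oppr_eq0 mulf_neq0 ?invr_eq0.
- have -> : Ordinal Hi = o2 by apply: val_inj. by rewrite e2 oppr_eq0 mulf_neq0 ?invr_eq0.
- have -> : Ordinal Hi = o3 by apply: val_inj. by rewrite e3 mulf_neq0.
Qed.
End T.
End Gen.


Section Inv.
Variable F : fieldType.
Implicit Types (s : {ffun 'I_4 -> F}) (q : 'S_4) (S : {set 'I_4}).

Definition fl S s j := if j \in S then (s j)^-1 else s j.

Lemma Wact_prod q S s (G : F -> F) :
  \prod_i G (Wact_s q S s i) = \prod_j G (fl S s j).
Proof.
rewrite (reindex_inj (@perm_inj _ q)); apply: eq_bigr => j _.
by rewrite ffunE /= permK.
Qed.

Lemma Wact_sum q S s (G : F -> F) :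
  \sum_i G (Wact_s q S s i) = \sum_j G (fl S s j).
Proof.
rewrite (reindex_inj (@perm_inj _ q)); apply: eq_bigr => j _.
by rewrite ffunE /= permK.
Qed.

Lemma xxV (a : F) : xx (a^-1) = xx a.
Proof. by rewrite /xx invrK addrC. Qed.

Lemma xx_fl S s j : xx (fl S s j) = xx (s j).
Proof. by rewrite /fl; case: ifP => _ //; rewrite xxV. Qed.

Lemma J1_inv q S s : J1 (Wact_s q S s) = J1 s.
Proof. rewrite /J1 Wact_sum; apply: eq_bigr => j _; by rewrite xx_fl. Qed.

Lemma J2_inv q S s : J2 (Wact_s q S s) = J2 s.
Proof. rewrite /J2 (Wact_sum q S s (fun a => xx a ^+ 2)); apply: eq_bigr => j _; by rewrite xx_fl. Qed.

Lemma Ap_inv q S s d : (forall i, s i != 0) ->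
  Ap (Wact_s q S s) (Wact_d q S s d) = Ap s d.
Proof.
move=> nz; rewrite /Ap /Wact_d (Wact_prod q S s (fun a => 1 + a^-1)) -mulrA.
congr (_ * _); rewrite big_mkcond /= -big_split /=; apply: eq_bigr => j _.
rewrite /fl; case: ifP => _; last by rewrite mul1r.
by rewrite invrK mulrDr mulr1 mulVf // addrC.
Qed.

Lemma Am_inv q S s d : (forall i, s i != 0) ->
  Am (Wact_s q S s) (Wact_d q S s d) = (-1) ^+ #|S| * Am s d.
Proof.
move=> nz; rewrite /Am /Wact_d (Wact_prod q S s (fun a => 1 - a^-1)) -mulrA.
rewrite [RHS]mulrCA; congr (_ * _).
have -> : (-1) ^+ #|S| = \prod_(j in S) (-1 : F) by rewrite prodr_const.
rewrite big_mkcond [X in _ = X * _]big_mkcond /= -!big_split /=; apply: eq_bigr => j _.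
rewrite /fl; case: ifP => _; last by rewrite mul1r.
rewrite invrK mulrBr mulr1 mulVf // mulN1r opprB. done.
Qed.
End Inv.


Section Orb.
Variable F : fieldType.
Hypothesis two : (2 : F) != 0.

Lemma xx_eq (a b : F) : a != 0 -> b != 0 -> xx a = xx b -> a = b \/ a = b^-1.
Proof.
move=> na nb E.
have : (a - b) * (a - b^-1) = a * (xx a - xx b) by rewrite /xx; field; rewrite ?na ?nb.
rewrite E subrr mulr0 => /eqP; rewrite mulf_eq0 !subr_eq0 => /orP[]/eqP; by [left|right].
Qed.

Lemma perm4 (x x' : 'I_4 -> F) :
  \sum_i x i = \sum_i x' i -> \sum_i x i ^+ 2 = \sum_i x' i ^+ 2 ->
  \prod_i (x i + 2) = \prod_i (x' i + 2) ->
  \prod_i (x i - 2) = \prod_i (x' i - 2) ->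
  exists p : 'S_4, forall i, x' i = x (p i).
Proof.
rewrite !sum4 !prod4.
set a := x o0; set b := x o1; set c := x o2; set d := x o3.
set a' := x' o0; set b' := x' o1; set c' := x' o2; set d' := x' o3.
move=> E1 Q P M.
have E2 : a*b + a*c + a*d + b*c + b*d + c*d = a'*b' + a'*c' + a'*d' + b'*c' + b'*d' + c'*d'.
  apply: (mulfI two).
  have -> : 2 * (a*b + a*c + a*d + b*c + b*d + c*d) = (a + b + c + d)^+2 - (a^+2 + b^+2 + c^+2 + d^+2) by ring.
  have -> : 2 * (a'*b' + a'*c' + a'*d' + b'*c' + b'*d' + c'*d') = (a' + b' + c' + d')^+2 - (a'^+2 + b'^+2 + c'^+2 + d'^+2) by ring.
  by rewrite E1 Q.
have E3 : a*b*c + a*b*d + a*c*d + b*c*d = a'*b'*c' + a'*b'*d' + a'*c'*d' + b'*c'*d'.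
  apply: (mulfI two); apply: (mulfI two).
  have -> : 2 * (2 * (a*b*c + a*b*d + a*c*d + b*c*d)) = (a+2)*(b+2)*(c+2)*(d+2) - (a-2)*(b-2)*(c-2)*(d-2) - 16 * (a+b+c+d) by ring.
  have -> : 2 * (2 * (a'*b'*c' + a'*b'*d' + a'*c'*d' + b'*c'*d')) = (a'+2)*(b'+2)*(c'+2)*(d'+2) - (a'-2)*(b'-2)*(c'-2)*(d'-2) - 16 * (a'+b'+c'+d') by ring.
  by rewrite P M E1.
have E4 : a*b*c*d = a'*b'*c'*d'.
  apply: (mulfI two).
  have -> : 2 * (a*b*c*d) = (a+2)*(b+2)*(c+2)*(d+2) + (a-2)*(b-2)*(c-2)*(d-2) - 8 * (a*b + a*c + a*d + b*c + b*d + c*d) - 32 by ring.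
  have -> : 2 * (a'*b'*c'*d') = (a'+2)*(b'+2)*(c'+2)*(d'+2) + (a'-2)*(b'-2)*(c'-2)*(d'-2) - 8 * (a'*b' + a'*c' + a'*d' + b'*c' + b'*d' + c'*d') - 32 by ring.
  by rewrite P M E2.
have H : forall a b c d : F, ('X - a%:P)*('X - b%:P)*('X - c%:P)*('X - d%:P) =
   'X^4 - (a+b+c+d)%:P * 'X^3 + (a*b + a*c + a*d + b*c + b*d + c*d)%:P * 'X^2
   - (a*b*c + a*b*d + a*c*d + b*c*d)%:P * 'X + (a*b*c*d)%:P.
  by move=> *; rewrite !(rmorphD, rmorphM) /=; ring.
have PE : \prod_(i <- mktuple x') ('X - i%:P) = \prod_(i <- mktuple x) ('X - i%:P).
  rewrite !big_tuple !prod4 !tnth_mktuple -/a -/b -/c -/d -/a' -/b' -/c' -/d'.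
  by rewrite !H E1 E2 E3 E4.
have /tuple_permP [p Hp] := prod_XsubC_eq PE.
exists p => i.
have /val_inj E : val (mktuple x') = val [tuple tnth (mktuple x) (p i) | i < 4] by [].
by have := congr1 (fun t => tnth t i) E; rewrite /= !tnth_mktuple.
Qed.
End Orb.

Section Orb2.
Variable F : fieldType.
Hypothesis two : (2 : F) != 0.
Implicit Types (s : {ffun 'I_4 -> F}) (q : 'S_4) (S : {set 'I_4}).

Definition tog S (j : 'I_4) := if j \in S then S :\ j else j |: S.

Lemma tog_fl S s j k : (s j)^-1 = s j -> fl (tog S j) s k = fl S s k.
Proof.
move=> hj; rewrite /fl /tog; case: (k =P j) => [->|/eqP ne].
  by rewrite hj; case: ifP => _; case: ifP.
by case jS: (j \in S); rewrite ?in_setD1 ?in_setU1 ?ne ?(negbTE ne).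
Qed.

Lemma tog_W q S s j : (s j)^-1 = s j -> Wact_s q (tog S j) s = Wact_s q S s.
Proof. move=> hj; apply/ffunP => i; rewrite !ffunE. by have := @tog_fl S s j (q^-1%g i) hj; rewrite /fl. Qed.

Lemma tog_d q S s d j : s j != 0 -> (s j)^-1 = s j ->
  Wact_d q (tog S j) s d = Wact_d q S s d * s j.
Proof.
move=> nz hj; rewrite /Wact_d /tog; case jS: (j \in S).
  rewrite (big_setD1 j jS) /= [d * (_ * _)]mulrCA -mulrA [_ * s j]mulrC mulrA.
  by rewrite mulVf // mul1r.
rewrite big_setU1 /=; last by rewrite jS.
by rewrite hj [s j * _]mulrC mulrA.
Qed.

Lemma tog_odd S j : odd #|tog S j| = ~~ odd #|S|.
Proof.
rewrite /tog; case jS: (j \in S).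
  by rewrite [in RHS](cardsD1 j S) jS /= negbK.
by rewrite cardsU1 jS.
Qed.

Lemma Ap_sq s d : (forall i, s i != 0) -> d ^+ 2 = \prod_i s i ->
  Ap s d ^+ 2 = \prod_i (xx (s i) + 2).
Proof.
move=> nz hd; rewrite /Ap exprMn hd expr2 -!big_split /=; apply: eq_bigr => i _.
by rewrite /xx; field; rewrite nz.
Qed.

Lemma Am_sq s d : (forall i, s i != 0) -> d ^+ 2 = \prod_i s i ->
  Am s d ^+ 2 = \prod_i (xx (s i) - 2).
Proof.
move=> nz hd; rewrite /Am exprMn hd expr2 -!big_split /=; apply: eq_bigr => i _.
by rewrite /xx; field; rewrite nz.
Qed.

Lemma half_zero (a : F) : a = - a -> a = 0.
Proof.
move=> h; have : a *+ 2 = 0 by rewrite mulr2n {1}h addNr.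
by move/eqP; rewrite -mulr_natl mulf_eq0 (negbTE two) /= => /eqP.
Qed.

Lemma orbit_sep s s' d d' : (forall i, s i != 0) -> (forall i, s' i != 0) -> d != 0 ->
  d ^+ 2 = \prod_i s i -> d' ^+ 2 = \prod_i s' i ->
  J1 s = J1 s' -> J2 s = J2 s' -> Ap s d = Ap s' d' -> Am s d = Am s' d' ->
  exists q S, ~~ odd #|S| /\ s' = Wact_s q S s /\ d' = Wact_d q S s d.
Proof.
move=> nz nz' nd hd hd' e1 e2 ep em.
have [p Hp] : exists p : 'S_4, forall i, xx (s' i) = xx (s (p i)).
  apply: (@perm4 F two (fun i => xx (s i)) (fun i => xx (s' i))).
  - by rewrite [LHS]e1.
  - by rewrite [LHS]e2.
  - by rewrite -(Ap_sq nz hd) -(Ap_sq nz' hd') ep.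
  - by rewrite -(Am_sq nz hd) -(Am_sq nz' hd') em.
pose q := (p^-1)%g.
have key : forall S, s' = Wact_s q S s -> d' = Wact_d q S s d ->
    exists S', ~~ odd #|S'| /\ s' = Wact_s q S' s /\ d' = Wact_d q S' s d.
  move=> S hs hd2; case odS: (odd #|S|); last by exists S; rewrite odS.
  have : Am s d = 0.
    apply: half_zero; rewrite [LHS]em hs hd2 Am_inv // -signr_odd odS expr1 mulN1r.
    done.
  move/eqP; rewrite /Am mulf_eq0 (negbTE nd) /= => /prodf_eq0 [j _].
  rewrite subr_eq0 eq_sym invr_eq1 => /eqP sj.
  have hj : (s j)^-1 = s j by rewrite sj invr1.
  exists (tog S j); rewrite tog_odd odS /= tog_W // (tog_d _ _ _ (nz j) hj) sj mulr1.
  by split.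
pose S0 := [set j | s' (q j) != s j].
have g0 : s' = Wact_s q S0 s.
  apply/ffunP => i; rewrite ffunE /= invgK inE /q permK.
  case: ifP => //; last by move/negbFE/eqP.
  move=> ne; case: (xx_eq (nz' i) (nz (p i)) (Hp i)) => // e.
  by move: ne; rewrite e eqxx.
have : d' ^+ 2 = Wact_d q S0 s d ^+ 2.
  rewrite hd' {1}g0 (Wact_prod q S0 s (fun a => a)) /Wact_d exprMn hd expr2 -!big_split /=.
  rewrite [X in _ = _ * X]big_mkcond /= -big_split /=; apply: eq_bigr => j _.
  rewrite /fl; case: ifP => _; last by rewrite !mulr1.
  by field; rewrite nz.
move/eqP; rewrite -subr_eq0 subr_sqr mulf_eq0 subr_eq0 addr_eq0 => /orP[]/eqP hd0.
  by exists q; apply: key S0 g0 hd0.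
have : Ap s d = 0.
  have Apn : forall s d, Ap s (-d) = - Ap s d by move=> *; rewrite /Ap mulNr.
  by apply: half_zero; rewrite [LHS]ep hd0 Apn g0 Ap_inv.
move/eqP; rewrite /Ap mulf_eq0 (negbTE nd) /= => /prodf_eq0 [j _].
rewrite addrC addr_eq0 => /eqP sj0.
have sj : s j = -1 by rewrite -[s j]invrK sj0 invrN1.
have hj : (s j)^-1 = s j by rewrite sj invrN1.
exists q; apply: (key (tog S0 j)); first by rewrite tog_W.
by rewrite (tog_d _ _ _ (nz j) hj) sj mulrN1.
Qed.
End Orb2.


Section Sing.
Variable F : fieldType.

Definition sing_eqs (p0 p1 p2 p3 : F) (chi : 'I_3 -> F) : Prop :=
 [/\ chi 0 * chi 1 * chi 2 - chi 0 ^+ 2 - chi 1 ^+ 2 - chi 2 ^+ 2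
      + p1 * chi 0 + p2 * chi 1 + p3 * chi 2 + (p0 + 4) = 0,
     chi 1 * chi 2 - 2 * chi 0 + p1 = 0,
     chi 0 * chi 2 - 2 * chi 1 + p2 = 0 &
     chi 0 * chi 1 - 2 * chi 2 + p3 = 0].

Lemma mderivXU (i j : 'I_3) : ('X_j : {mpoly F[3]})^`M(i) = ((j == i)%:R)%:MP.
Proof.
rewrite mderivX mnm1E; case: eqP => [->|_].
  have -> : (U_(i) - U_(i))%MM = 0%MM by apply/mnmP => k; rewrite mnmBE subnn mnm0E.
  by rewrite mpolyX0 scale1r mpolyC1.
by rewrite scale0r mpolyC0.
Qed.

Lemma ord3 (i : 'I_3) : i = 0 \/ i = 1 \/ i = 2.
Proof.
case: i => [[|[|[|//]]] Hi]; [left|right;left|right;right]; by apply: val_inj.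
Qed.

Lemma sing_iff k0 k1 u0 u1 chi : singular_point k0 k1 u0 u1 chi <->
  sing_eqs (pc0 k0 k1 u0 u1) (pc1 k0 k1 u0 u1) (pc2 k0 k1 u0 u1) (pc3 k0 k1 u0 u1) chi.
Proof.
have ev : (Rpoly k0 k1 u0 u1).@[chi] = chi 0 * chi 1 * chi 2 - chi 0 ^+ 2 - chi 1 ^+ 2 - chi 2 ^+ 2
      + pc1 k0 k1 u0 u1 * chi 0 + pc2 k0 k1 u0 u1 * chi 1 + pc3 k0 k1 u0 u1 * chi 2 + (pc0 k0 k1 u0 u1 + 4).
  by rewrite /Rpoly !expr2 !(mevalD, mevalB, mevalN, mevalM, mevalZ, mevalC, mevalXU).
have dv : forall i, ((Rpoly k0 k1 u0 u1)^`M(i)).@[chi] =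
   let e j := ((j == i)%:R : F) in
   (e 0 * chi 1 + chi 0 * e 1) * chi 2 + chi 0 * chi 1 * e 2
   - (e 0 * chi 0 + chi 0 * e 0) - (e 1 * chi 1 + chi 1 * e 1) - (e 2 * chi 2 + chi 2 * e 2)
   + pc1 k0 k1 u0 u1 * e 0 + pc2 k0 k1 u0 u1 * e 1 + pc3 k0 k1 u0 u1 * e 2.
  move=> i; rewrite /Rpoly !expr2.
  rewrite !(mderivD, mderivB, mderivN, mderivM, mderivZ, mderivC, mderivXU).
  rewrite !(mevalD, mevalB, mevalN, mevalM, mevalZ, mevalC, mevalXU) /=.
  by rewrite addr0.
split.
  move=> [h0 hd]; have d0 := hd 0; have d1 := hd 1; have d2 := hd 2.
  rewrite dv /= in d0; rewrite dv /= in d1; rewrite dv /= in d2.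
  split; [by rewrite -ev | | |].
  - by apply: (etrans _ d0); ring.
  - by apply: (etrans _ d1); ring.
  - by apply: (etrans _ d2); ring.
move=> [h h0 h1 h2]; split; first by rewrite ev.
move=> i; rewrite dv; case: (ord3 i) => [->|[->|->]] /=.
- by apply: (etrans _ h0); ring.
- by apply: (etrans _ h1); ring.
- by apply: (etrans _ h2); ring.
Qed.
End Sing.

Section One.
Variable F : fieldType.

Lemma bar_eq (v k : F) : k != 0 -> (v - k) * (v + k^-1) = 0 -> bar v = bar k.
Proof.
move=> nk /eqP; rewrite mulf_eq0 subr_eq0 addr_eq0 => /orP[]/eqP -> //.
by rewrite /bar invrN invrK opprK addrC.
Qed.

Lemma onedim_sing (k0 k1 u0 u1 v0 v1 w0 w1 : F) (chi : 'I_3 -> F) :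
  k0 != 0 -> k1 != 0 -> u0 != 0 -> u1 != 0 ->
  onedim_rep k0 k1 u0 u1 v0 v1 w0 w1 ->
  w1 * v1 + v0 * w0 = chi 0 -> v1 * v0 + w0 * w1 = chi 1 ->
  v1 * w0 + w0^-1 * v1^-1 = chi 2 ->
  sing_eqs (pc0 k0 k1 u0 u1) (pc1 k0 k1 u0 u1) (pc2 k0 k1 u0 u1) (pc3 k0 k1 u0 u1) chi.
Proof.
move=> nk0 nk1 nu0 nu1 [e0 e1 e2 e3 e4] c0 c1 c2.
rewrite /pc0 /pc1 /pc2 /pc3 -(bar_eq nk0 e0) -(bar_eq nk1 e1) -(bar_eq nu0 e2) -(bar_eq nu1 e3).
have : w1 * v1 * v0 * w0 != 0 by rewrite e4 oner_eq0.
rewrite !mulf_eq0 !negb_or => /andP[/andP[/andP[nw1 nv1] nv0] nw0].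
have hw1 : w1 = (v1 * v0 * w0)^-1.
  by apply/esym/mulr1_eq; rewrite -e4; ring.
rewrite /sing_eqs -c0 -c1 -c2 hw1 /bar.
split; field; by rewrite ?nv0 ?nv1 ?nw0 ?oner_neq0.
Qed.
End One.


Lemma sing_uniq (F : fieldType) (p0 p1 p2 p3 q0 q1 q2 q3 : F) chi :
  sing_eqs p0 p1 p2 p3 chi -> sing_eqs q0 q1 q2 q3 chi ->
  [/\ p0 = q0, p1 = q1, p2 = q2 & p3 = q3].
Proof.
move=> [h h1 h2 h3] [g g1 g2 g3].
have e1 : p1 = q1 by apply: (@addrI _ (chi 1 * chi 2 - 2 * chi 0)); rewrite h1 g1.
have e2 : p2 = q2 by apply: (@addrI _ (chi 0 * chi 2 - 2 * chi 1)); rewrite h2 g2.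
have e3 : p3 = q3 by apply: (@addrI _ (chi 0 * chi 1 - 2 * chi 2)); rewrite h3 g3.
split => //; by have := etrans h (esym g); rewrite e1 e2 e3 => /addrI /addIr.
Qed.

Section PcInv.
Variable F : fieldType.
Hypothesis two : (2 : F) != 0.
Variables k0 k1 u0 u1 k0' k1' u0' u1' : F.
Hypotheses (h0 : k0 != 0) (h1 : k1 != 0) (h2 : u0 != 0) (h3 : u1 != 0).
Hypotheses (h0' : k0' != 0) (h1' : k1' != 0) (h2' : u0' != 0) (h3' : u1' != 0).
Let s := theta_s k0 k1 u0 u1.
Let d := theta_d k0 k1 u0 u1.
Let s' := theta_s k0' k1' u0' u1'.
Let d' := theta_d k0' k1' u0' u1'.

Lemma inv_of_pc : pc0 k0 k1 u0 u1 = pc0 k0' k1' u0' u1' ->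
  pc1 k0 k1 u0 u1 = pc1 k0' k1' u0' u1' ->
  pc2 k0 k1 u0 u1 = pc2 k0' k1' u0' u1' ->
  pc3 k0 k1 u0 u1 = pc3 k0' k1' u0' u1' ->
  [/\ J1 s = J1 s', J2 s = J2 s', Ap s d = Ap s' d' & Am s d = Am s' d'].
Proof.
move=> e0 e1 e2 e3.
have j1 : J1 s = J1 s' by rewrite /s /s' -(pc2E h0 h1 h2 h3) -(pc2E h0' h1' h2' h3') e2.
split => //.
- have -> : J2 s = 2 * pc0 k0 k1 u0 u1 + 16 + J1 s ^+ 2 by rewrite (pc0E h0 h1 h2 h3); ring.
  have -> : J2 s' = 2 * pc0 k0' k1' u0' u1' + 16 + J1 s' ^+ 2 by rewrite (pc0E h0' h1' h2' h3'); ring.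
  by rewrite e0 j1.
- apply: (mulfI two).
  have -> : 2 * Ap s d = 2 * pc1 k0 k1 u0 u1 - 2 * pc3 k0 k1 u0 u1
    by rewrite (pc1E h0 h1 h2 h3) (pc3E h0 h1 h2 h3); ring.
  have -> : 2 * Ap s' d' = 2 * pc1 k0' k1' u0' u1' - 2 * pc3 k0' k1' u0' u1'
    by rewrite (pc1E h0' h1' h2' h3') (pc3E h0' h1' h2' h3'); ring.
  by rewrite e1 e3.
- apply: (mulfI two).
  have -> : 2 * Am s d = 2 * pc1 k0 k1 u0 u1 + 2 * pc3 k0 k1 u0 u1
    by rewrite (pc1E h0 h1 h2 h3) (pc3E h0 h1 h2 h3); ring.
  have -> : 2 * Am s' d' = 2 * pc1 k0' k1' u0' u1' + 2 * pc3 k0' k1' u0' u1'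
    by rewrite (pc1E h0' h1' h2' h3') (pc3E h0' h1' h2' h3'); ring.
  by rewrite e1 e3.
Qed.

Lemma pc_of_inv : J1 s = J1 s' -> J2 s = J2 s' -> Ap s d = Ap s' d' -> Am s d = Am s' d' ->
  [/\ pc0 k0 k1 u0 u1 = pc0 k0' k1' u0' u1',
  pc1 k0 k1 u0 u1 = pc1 k0' k1' u0' u1',
  pc2 k0 k1 u0 u1 = pc2 k0' k1' u0' u1' &
  pc3 k0 k1 u0 u1 = pc3 k0' k1' u0' u1'].
Proof.
move=> j1 j2 jp jm; split.
- by apply: (mulfI two); rewrite (pc0E h0 h1 h2 h3) (pc0E h0' h1' h2' h3') -/s -/s' j1 j2.
- by apply: (mulfI two); rewrite (pc1E h0 h1 h2 h3) (pc1E h0' h1' h2' h3') -/s -/s' -/d -/d' jp jm.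
- by rewrite (pc2E h0 h1 h2 h3) (pc2E h0' h1' h2' h3') -/s -/s' j1.
- by apply: (mulfI two); rewrite (pc3E h0 h1 h2 h3) (pc3E h0' h1' h2' h3') -/s -/s' -/d -/d' jp jm.
Qed.
End PcInv.

Section Main.
Variable R : rcfType.
Local Notation C := (R[i]).

Lemma two_nz : (2 : C) != 0.
Proof. by rewrite pnatr_eq0. Qed.

Lemma exists_xx (c : C) : exists a : C, a != 0 /\ a + a^-1 = c.
Proof.
pose r := sqrtC (c ^+ 2 - 4).
have hr : r ^+ 2 = c ^+ 2 - 4 by rewrite sqrtCK.
have h2 := two_nz.
have hab : (c + r) / 2 * ((c - r) / 2) = 1.
  have -> : (c + r) / 2 * ((c - r) / 2) = (c ^+ 2 - r ^+ 2) / 4.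
    by field.
  by rewrite hr; field.
exists ((c + r) / 2); split.
  by apply/eqP => e; move: hab; rewrite e mul0r => /eqP; rewrite eq_sym oner_eq0.
by rewrite (mulr1_eq hab); field.
Qed.

End Main.

Theorem proposition3p5 (R : rcfType)
    (s : {ffun 'I_4 -> R[i]}) (d : R[i]) (hs : in_T s d)
    (k0 k1 u0 u1 : R[i])
    (hk0 : k0 != 0) (hk1 : k1 != 0) (hu0 : u0 != 0) (hu1 : u1 != 0)
    (ht : theta_s k0 k1 u0 u1 = s /\ theta_d k0 k1 u0 u1 = d)
    (chi : 'I_3 -> R[i]) (hchi : on_surface k0 k1 u0 u1 chi) :
  singular_point k0 k1 u0 u1 chi <->
  exists (p : 'S_4) (S : {set 'I_4}), W_elt p S /\
    exists k0' k1' u0' u1' : R[i],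
      [/\ k0' != 0, k1' != 0, u0' != 0 & u1' != 0] /\
      [/\ theta_s k0' k1' u0' u1' = Wact_s p S s,
          theta_d k0' k1' u0' u1' = Wact_d p S s d
        & extends_1dim k0' k1' u0' u1' chi].
Proof.
case: ht => hs0 hd0; subst s d.
have two := @two_nz R.
rewrite sing_iff; split.
- move=> sg.
  have [a [na ea]] := exists_xx (chi 0).
  have [b [nb eb]] := exists_xx (chi 1).
  have [c [nc ec]] := exists_xx (chi 2).
  pose v1 := sqrtC (a * b * c).
  have hv1 : v1 ^+ 2 = a * b * c by rewrite sqrtCK.
  have nabc : a * b * c != 0 by rewrite !mulf_neq0.
  have nv1 : v1 != 0.
    by apply: contraNneq nabc => e; rewrite -hv1 e expr0n.
  have ha : a = v1 ^+ 2 / (b * c) by rewrite hv1; field; rewrite nb nc.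
  pose v0 := b / v1; pose w0 := c / v1; pose w1 := a / v1.
  have nv0 : v0 != 0 by rewrite mulf_neq0 ?invr_eq0.
  have nw0 : w0 != 0 by rewrite mulf_neq0 ?invr_eq0.
  have nw1 : w1 != 0 by rewrite mulf_neq0 ?invr_eq0.
  have rep : onedim_rep v0 v1 w0 w1 v0 v1 w0 w1.
    split; rewrite ?subrr ?mul0r //.
    by rewrite /w1 /v0 /w0 ha; field; rewrite nv1 nb nc.
  have c0 : w1 * v1 + v0 * w0 = chi 0.
    by rewrite -ea /w1 /v0 /w0 ha; field; rewrite nv1 nb nc.
  have c1 : v1 * v0 + w0 * w1 = chi 1.
    by rewrite -eb /w1 /v0 /w0 ha; field; rewrite nv1 nb nc.
  have c2 : v1 * w0 + w0^-1 * v1^-1 = chi 2.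
    by rewrite -ec /w1 /v0 /w0; field; rewrite nv1 nc.
  have sg' := onedim_sing nv0 nv1 nw0 nw1 rep c0 c1 c2.
  have [e0 e1 e2 e3] := sing_uniq sg sg'.
  have [j1 j2 jp jm] := inv_of_pc two hk0 hk1 hu0 hu1 nv0 nv1 nw0 nw1 e0 e1 e2 e3.
  have nd : theta_d k0 k1 u0 u1 != 0 by rewrite mulf_neq0.
  have [q [S [ev [hs2 hd2]]]] := orbit_sep two (theta_nz hk0 hk1 hu0 hu1)
    (theta_nz nv0 nv1 nw0 nw1) nd (theta_prod k0 u0 hk1 hu1) (theta_prod v0 w0 nv1 nw1)
    j1 j2 jp jm.
  exists q, S; split; first exact: ev.
  exists v0, v1, w0, w1; split; first by split.
  split; [exact: hs2 | exact: hd2 | ].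
  by exists v0, v1, w0, w1; split.
- move=> [p [S [ev [k0' [k1' [u0' [u1' [[n0 n1 n2 n3] [hs2 hd2 ext]]]]]]]]].
  case: ext => [v0 [v1 [w0 [w1 [r c0 c1 c2]]]]].
  have sg' := onedim_sing n0 n1 n2 n3 r c0 c1 c2.
  have nz := theta_nz hk0 hk1 hu0 hu1.
  have j1 : J1 (theta_s k0 k1 u0 u1) = J1 (theta_s k0' k1' u0' u1') by rewrite hs2 J1_inv.
  have j2 : J2 (theta_s k0 k1 u0 u1) = J2 (theta_s k0' k1' u0' u1') by rewrite hs2 J2_inv.
  have jp : Ap (theta_s k0 k1 u0 u1) (theta_d k0 k1 u0 u1) =
     Ap (theta_s k0' k1' u0' u1') (theta_d k0' k1' u0' u1') by rewrite hs2 hd2 Ap_inv.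
  have jm : Am (theta_s k0 k1 u0 u1) (theta_d k0 k1 u0 u1) =
     Am (theta_s k0' k1' u0' u1') (theta_d k0' k1' u0' u1').
    have ev' : odd #|S| = false by apply: negbTE.
    by rewrite hs2 hd2 (Am_inv _ _ _ nz) -signr_odd ev' expr0 mul1r.
  have [e0 e1 e2 e3] := pc_of_inv two hk0 hk1 hu0 hu1 n0 n1 n2 n3 j1 j2 jp jm.
  by rewrite e0 e1 e2 e3.
Qed.
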